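(* Let $\Bbbk$ be an algebraically closed field and let $g(x),h(x)$ be polynomials with nonnegative integer coefficients. Let $A$ be a finite-dimensional associative $\Bbbk$-algebra and $\mathrm{F}$ an exact endofunctor of $A\text{-}\mathrm{mod}$ with $g(\mathrm{F})\cong h(\mathrm{F})$. Let $B$ be a finite-dimensional associative $\Bbbk$-algebra, $C=A\otimes_\Bbbk B$, and $\mathrm{G}=\mathrm{F}\boxtimes\mathrm{ID}_B$. Then: (i) $\mathrm{G}$ is selfadjoint if and only if $\mathrm{F}$ is selfadjoint; (ii) $g(\mathrm{G})\cong h(\mathrm{G})$.
   Context: Module categories consist of finite-dimensional left modules; functors are additive and $\Bbbk$-linear. For a polynomial $p(x)=\sum_j c_jx^j$ with $c_j\in\mathbb{Z}_{\geq0}$, $p(\mathrm{F})$ denotes $\bigoplus_j c_j\mathrm{F}^j$, with $\mathrm{F}^0=\mathrm{ID}$, $\mathrm{F}^j$ the $j$-fold composite, and $c\,\mathrm{H}$ the direct sum of $c$ copies of $\mathrm{H}$. The external tensor product $\mathrm{G}=\mathrm{F}\boxtimes\mathrm{ID}_B$ is the endofunctor of $C\text{-}\mathrm{mod}$ defined as follows: a $C$-module $X$ is viewed as an $A$-module together with an action of $B$ by $A$-endomorphisms $\psi_b$, $b\in B$; then $\mathrm{G}X$ is the $A$-module $\mathrm{F}X$ with $B$ acting by $\mathrm{F}\psi_b$, and $\mathrm{G}$ acts on morphisms as $\mathrm{F}$. A functor is selfadjoint if it is left adjoint to itself. *)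

(* Defs.v *)
From HB Require Import structures.
From mathcomp Require Import all_boot all_order all_algebra all_field.
Set Implicit Arguments. Unset Strict Implicit. Unset Printing Implicit Defensive.
Import GRing.Theory.
Local Open Scope ring_scope.

(* Finite-dimensional modules are encoded concretely: a module is a natural
   number [mdim] (the k-dimension) together with matrices [mact t] giving the
   action of "generators" t : T on column vectors k^mdim.  For A-modules,
   T = A; for C = A (x) B modules, T = A + B (the action of a (x) 1 and of
   1 (x) b).  Morphisms X -> Y are matrices 'M_(dim Y, dim X) (acting on
   column vectors) intertwining the actions; composition is *m. *)

Record mdata (K : fieldType) (T : Type) := MData {
  mdim : nat;
  mact : T -> 'M[K]_mdim }.

Definition is_hom (K : fieldType) (T : Type) (X Y : mdata K T)
  (f : 'M[K]_(mdim Y, mdim X)) : Prop :=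
  forall t, f *m mact X t = mact Y t *m f.

Definition is_amod (K : fieldType) (A : falgType K) (X : mdata K A) : Prop :=
  [/\ forall (c : K) (a b : A), mact X (c *: a + b) = c *: mact X a + mact X b,
      mact X 1 = 1%:M
    & forall a b : A, mact X (a * b) = mact X a *m mact X b].

Definition resA (K : fieldType) (A B : Type) (X : mdata K (A + B)) : mdata K A :=
  @MData K A (mdim X) (fun a => mact X (inl a)).
Definition resB (K : fieldType) (A B : Type) (X : mdata K (A + B)) : mdata K B :=
  @MData K B (mdim X) (fun b => mact X (inr b)).

(* X is a module over C = A (x)_k B: an A-module with a commuting action of B
   (i.e. B acting by A-endomorphisms) *)
Definition is_cmod (K : fieldType) (A B : falgType K) (X : mdata K (A + B)) : Prop :=
  [/\ is_amod (resA X), is_amod (resB X)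
    & forall (a : A) (b : B), mact X (inl a) *m mact X (inr b) = mact X (inr b) *m mact X (inl a)].

Record fdata (K : fieldType) (T : Type) := FData {
  fobj : mdata K T -> mdata K T;
  fmap : forall X Y : mdata K T,
     'M[K]_(mdim Y, mdim X) -> 'M[K]_(mdim (fobj Y), mdim (fobj X)) }.
Arguments fmap {K T} f {X Y}.

Section Cat.
Variables (K : fieldType) (T : Type) (P : mdata K T -> Prop).

Definition is_functor (F : fdata K T) : Prop :=
  [/\ forall X, P X -> P (fobj F X),
      forall X Y f, P X -> P Y -> @is_hom K T X Y f -> is_hom (fmap F f),
      forall X, P X -> fmap F (1%:M : 'M_(mdim X)) = 1%:M,
      forall X Y Z (f : 'M_(mdim Y, mdim X)) (g : 'M_(mdim Z, mdim Y)),
        P X -> P Y -> P Z -> is_hom f -> is_hom g ->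
        fmap F (g *m f) = fmap F g *m fmap F f
    & forall X Y (c : K) (f g : 'M_(mdim Y, mdim X)),
        P X -> P Y -> is_hom f -> is_hom g ->
        fmap F (c *: f + g) = c *: fmap F f + fmap F g].

Definition short_exact (X Y Z : mdata K T) (f : 'M[K]_(mdim Y, mdim X))
  (g : 'M[K]_(mdim Z, mdim Y)) : Prop :=
  [/\ is_hom f /\ is_hom g, \rank f = mdim X, \rank g = mdim Z,
      g *m f = 0 & (\rank f + \rank g)%N = mdim Y].

Definition exact_functor (F : fdata K T) : Prop :=
  forall X Y Z f g, P X -> P Y -> P Z -> @short_exact X Y Z f g ->
    short_exact (fmap F f) (fmap F g).

Definition natiso (F1 F2 : fdata K T) : Prop :=
  exists (eta : forall X, 'M[K]_(mdim (fobj F2 X), mdim (fobj F1 X)))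
         (theta : forall X, 'M[K]_(mdim (fobj F1 X), mdim (fobj F2 X))),
    (forall X, P X -> [/\ is_hom (eta X), is_hom (theta X),
                          eta X *m theta X = 1%:M & theta X *m eta X = 1%:M]) /\
    (forall X Y (f : 'M_(mdim Y, mdim X)), P X -> P Y -> is_hom f ->
        eta Y *m fmap F1 f = fmap F2 f *m eta X).

(* F is left adjoint to G: a bijection Hom(F X, Y) ~= Hom(X, G Y), natural
   in X and Y *)
Definition adjoint (F G : fdata K T) : Prop :=
  exists (phi : forall X Y, 'M[K]_(mdim Y, mdim (fobj F X)) ->
                            'M[K]_(mdim (fobj G Y), mdim X))
         (psi : forall X Y, 'M[K]_(mdim (fobj G Y), mdim X) ->
                            'M[K]_(mdim Y, mdim (fobj F X))),
    [/\ forall X Y u, P X -> P Y -> is_hom u ->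
          is_hom (phi X Y u) /\ psi X Y (phi X Y u) = u,
        forall X Y v, P X -> P Y -> is_hom v ->
          is_hom (psi X Y v) /\ phi X Y (psi X Y v) = v
      & forall X' X Y Y' (h : 'M_(mdim X, mdim X')) (u : 'M_(mdim Y, mdim (fobj F X)))
               (g : 'M_(mdim Y', mdim Y)),
          P X' -> P X -> P Y -> P Y' -> is_hom h -> is_hom u -> is_hom g ->
          phi X' Y' (g *m u *m fmap F h) = fmap G g *m phi X Y u *m h].

Definition selfadjoint (F : fdata K T) : Prop := adjoint F F.

End Cat.

Section FunctorOps.
Variables (K : fieldType) (T : Type).

Definition mzero : mdata K T := @MData K T 0 (fun _ => 0).
Definition msum (X Y : mdata K T) : mdata K T :=
  @MData K T (mdim X + mdim Y) (fun t => block_mx (mact X t) 0 0 (mact Y t)).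

Definition fid : fdata K T := @FData K T id (fun X Y f => f).
Definition fzero : fdata K T := @FData K T (fun _ => mzero) (fun X Y f => 0).
Definition fcomp (F G : fdata K T) : fdata K T :=
  @FData K T (fun X => fobj F (fobj G X)) (fun X Y f => fmap F (fmap G f)).
Definition fsum (F G : fdata K T) : fdata K T :=
  @FData K T (fun X => msum (fobj F X) (fobj G X))
             (fun X Y f => block_mx (fmap F f) 0 0 (fmap G f)).

Fixpoint fpow (F : fdata K T) (j : nat) : fdata K T :=
  if j is j'.+1 then fcomp F (fpow F j') else fid.
Fixpoint fcopies (c : nat) (H : fdata K T) : fdata K T :=
  if c is c'.+1 then fsum H (fcopies c' H) else fzero.

(* p(F) = (+)_j c_j F^j, where p = sum_j c_j x^j is given by its coefficient
   list [:: c_0; c_1; ...] of nonnegative integers *)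
Fixpoint fpoly_from (j : nat) (p : seq nat) (F : fdata K T) : fdata K T :=
  if p is c :: p' then fsum (fcopies c (fpow F j)) (fpoly_from j.+1 p' F)
  else fzero.
Definition fpoly (p : seq nat) (F : fdata K T) := fpoly_from 0 p F.

End FunctorOps.

(* G = F |x| ID_B on C-modules: G X is F (X as A-module), with B acting by
   F(psi_b); G acts on morphisms as F *)
Definition fbox (K : fieldType) (A B : Type) (F : fdata K A) : fdata K (A + B) :=
  @FData K (A + B)
    (fun X => @MData K (A + B) (mdim (fobj F (resA X)))
       (fun t => match t with
                 | inl a => mact (fobj F (resA X)) a
                 | inr b => @fmap K A F (resA X) (resA X) (mact X (inr b))
                 end))
    (fun X Y f => @fmap K A F (resA X) (resA Y) f).

(* Main.v *)
Require Import Defs.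
From mathcomp Require Import all_boot all_order all_algebra all_field.
From HB Require Import structures.
From Stdlib Require Import Classical.
Set Implicit Arguments. Unset Strict Implicit. Unset Printing Implicit Defensive.
Import GRing.Theory.
Local Open Scope ring_scope.

Section Dec.
Variables (K : fieldType) (s : nat).

Definition decomp n m (io : 'I_s -> 'M[K]_(n,m)) (pr : 'I_s -> 'M[K]_(m,n)) :=
  (\sum_i io i *m pr i = 1%:M) /\ (forall i j, pr i *m io j = if i == j then 1%:M else 0).

Definition lift n1 m1 n2 m2 (io : 'I_s -> 'M[K]_(n1,m1)) (pr : 'I_s -> 'M[K]_(m2,n2))
  (w : 'M[K]_(m1,m2)) : 'M[K]_(n1,n2) := \sum_i io i *m w *m pr i.

Definition bact n m (io : 'I_s -> 'M[K]_(n,m)) (pr : 'I_s -> 'M[K]_(m,n)) (r : 'M[K]_s)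
  : 'M[K]_n := \sum_i \sum_j r i j *: (io i *m pr j).

Lemma sum_delta_l n m (F : 'I_s -> 'M[K]_(n,m)) i :
  \sum_j (if i == j then F j else 0) = F i.
Proof. by rewrite (bigD1 i) //= eqxx big1 ?addr0 // => j /negPf; rewrite eq_sym => ->. Qed.
Lemma sum_delta_r n m (F : 'I_s -> 'M[K]_(n,m)) i :
  \sum_j (if j == i then F j else 0) = F i.
Proof. by rewrite (bigD1 i) //= eqxx big1 ?addr0 // => j /negPf ->. Qed.

Section D.
Variables (n m : nat) (io : 'I_s -> 'M[K]_(n,m)) (pr : 'I_s -> 'M[K]_(m,n)).
Hypothesis D : decomp io pr.

Lemma pr_lift n2 m2 (pr2 : 'I_s -> 'M[K]_(m2, n2))
  (w : 'M[K]_(m, m2)) i : pr i *m lift io pr2 w = w *m pr2 i.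
Proof.
rewrite /lift mulmx_sumr (eq_bigr (fun j => if i == j then w *m pr2 j else 0)).
  by rewrite sum_delta_l.
move=> j _; rewrite !mulmxA D.2; case: eqP => _; first by rewrite mul1mx.
by rewrite !mul0mx.
Qed.

Lemma lift_io n2 m2 (io2 : 'I_s -> 'M[K]_(n2,m2))
  (w : 'M[K]_(m2, m)) j : lift io2 pr w *m io j = io2 j *m w.
Proof.
rewrite /lift mulmx_suml (eq_bigr (fun i => if i == j then io2 i *m w else 0)).
  by rewrite sum_delta_r.
move=> i _; rewrite -!mulmxA D.2; case: eqP => _; first by rewrite mulmx1.
by rewrite !mulmx0.
Qed.

Lemma lift_mul n1 m1 n2 m2 (io1 : 'I_s -> 'M[K]_(n1,m1)) (pr2 : 'I_s -> 'M[K]_(m2, n2))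
  (w : 'M[K]_(m1, m)) (v : 'M[K]_(m, m2)) :
  lift io1 pr w *m lift io pr2 v = lift io1 pr2 (w *m v).
Proof.
rewrite /lift mulmx_suml; apply: eq_bigr => i _.
by rewrite -!mulmxA pr_lift.
Qed.

Lemma lift1 : lift io pr 1%:M = 1%:M.
Proof. by rewrite -D.1; apply: eq_bigr => i _; rewrite mulmx1. Qed.

Lemma pr_bact r i : pr i *m bact io pr r = \sum_j r i j *: pr j.
Proof.
rewrite /bact mulmx_sumr (eq_bigr (fun k => if i == k then \sum_j r k j *: pr j else 0)).
  by rewrite sum_delta_l.
move=> k _; rewrite mulmx_sumr; case: eqP => [<-|ne].
  by apply: eq_bigr => j _; rewrite -scalemxAr mulmxA D.2 eqxx mul1mx.
by rewrite big1 // => j _; rewrite -scalemxAr mulmxA D.2; case: eqP => // _; rewrite mul0mx scaler0.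
Qed.

Lemma bact_io r j : bact io pr r *m io j = \sum_i r i j *: io i.
Proof.
rewrite /bact mulmx_suml; apply: eq_bigr => i _.
rewrite mulmx_suml (eq_bigr (fun k => if k == j then r i k *: io i else 0)).
  by rewrite sum_delta_r.
move=> k _; rewrite -scalemxAl -mulmxA D.2; case: eqP => [->|_].
  by rewrite mulmx1.
by rewrite mulmx0 scaler0.
Qed.

Lemma bact_mul r1 r2 : bact io pr r1 *m bact io pr r2 = bact io pr (r1 *m r2).
Proof.
rewrite {1}/bact mulmx_suml /bact; apply: eq_bigr => i _.
rewrite mulmx_suml (eq_bigr (fun j => \sum_k r1 i j *: (r2 j k *: (io i *m pr k)))).
  rewrite exchange_big /=; apply: eq_bigr => k _; rewrite mxE scaler_suml.
  by apply: eq_bigr => j _; rewrite scalerA.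
move=> j _; rewrite -scalemxAl -mulmxA pr_bact mulmx_sumr scaler_sumr.
by apply: eq_bigr => k _; rewrite -scalemxAr.
Qed.

Lemma bact1 : bact io pr 1%:M = 1%:M.
Proof.
rewrite -D.1 /bact; apply: eq_bigr => i _.
rewrite (eq_bigr (fun j => if i == j then io j *m pr j else 0)).
  by rewrite sum_delta_l.
by move=> j _; rewrite mxE; case: eqP => [->|_]; rewrite ?scale1r ?scale0r.
Qed.

Lemma bact_lin c r1 r2 : bact io pr (c *: r1 + r2) = c *: bact io pr r1 + bact io pr r2.
Proof.
rewrite /bact scaler_sumr -big_split; apply: eq_bigr => i _.
rewrite scaler_sumr -big_split; apply: eq_bigr => j _.
by rewrite !mxE scalerDl scalerA.
Qed.

Lemma hom_decomp n' m' (io' : 'I_s -> 'M[K]_(n',m')) (T : 'M[K]_(n', n)) (S : 'M[K]_(m', m)) :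
  (forall i, T *m io i = io' i *m S) -> T = lift io' pr S.
Proof.
move=> H; rewrite -[T]mulmx1 -D.1 mulmx_sumr /lift; apply: eq_bigr => i _.
by rewrite mulmxA H.
Qed.

End D.

Lemma lift_lin n1 m1 n2 m2 (io : 'I_s -> 'M[K]_(n1,m1)) (pr : 'I_s -> 'M[K]_(m2,n2)) c w1 w2 :
  lift io pr (c *: w1 + w2) = c *: lift io pr w1 + lift io pr w2.
Proof.
rewrite /lift scaler_sumr -big_split; apply: eq_bigr => i _.
by rewrite mulmxDr mulmxDl -scalemxAr -scalemxAl.
Qed.
End Dec.

Section D2.
Variables (K : fieldType) (s : nat).
Variables (nY mY : nat) (ioY : 'I_s -> 'M[K]_(nY,mY)) (prY : 'I_s -> 'M[K]_(mY,nY)).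
Variables (nX mX : nat) (ioX : 'I_s -> 'M[K]_(nX,mX)) (prX : 'I_s -> 'M[K]_(mX,nX)).
Hypotheses (DY : decomp ioY prY) (DX : decomp ioX prX).

Lemma bact_lift r (w : 'M[K]_(mY, mX)) :
  bact ioY prY r *m lift ioY prX w = lift ioY prX w *m bact ioX prX r.
Proof.
rewrite {1}/bact mulmx_suml /lift mulmx_suml; apply: eq_bigr => i _.
rewrite mulmx_suml -mulmxA pr_bact // mulmx_sumr.
apply: eq_bigr => j _; rewrite -scalemxAl -mulmxA pr_lift // -scalemxAr.
by rewrite mulmxA.
Qed.

Lemma commute_lift (T : Type) (rho : T -> 'M[K]_s)
  (Schur : forall f : 'M[K]_s, (forall t, f *m rho t = rho t *m f) -> exists c, f = c%:M)
  (i0 : 'I_s) (W : 'M[K]_(nY, nX)) :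
  (forall t, W *m bact ioX prX (rho t) = bact ioY prY (rho t) *m W) ->
  W = lift ioY prX (prY i0 *m W *m ioX i0).
Proof.
move=> HW.
pose V i j := prY i *m W *m ioX j.
have HV t i j : \sum_k rho t k j *: V i k = \sum_k rho t i k *: V k j.
  move: (congr1 (fun M => prY i *m M *m ioX j) (HW t)) => /=.
  rewrite -!mulmxA bact_io // [X in _ = X -> _]mulmxA pr_bact // !mulmx_sumr mulmx_suml => E.
  rewrite (eq_bigr (fun k => prY i *m (W *m (rho t k j *: ioX k)))); last first.
    by move=> k _; rewrite /V -!scalemxAr !mulmxA.
  rewrite E; apply: eq_bigr => k _; by rewrite /V -scalemxAl !mulmxA.
have EV i j : V i j = if i == j then V i0 i0 else 0.
  apply/matrixP => p q.
  pose E := \matrix_(i, j) V i j p q.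
  have [c Ec] : exists c, E = c%:M.
    apply: Schur => t; apply/matrixP => a b; rewrite !mxE.
    have := congr1 (fun M : 'M_(mY, mX) => M p q) (HV t a b).
    rewrite !summxE => Eq.
    rewrite (eq_bigr (fun k => (rho t k b *: V a k) p q)); last first.
      by move=> k _; rewrite mxE [in RHS]mxE mulrC.
    rewrite Eq; apply: eq_bigr => k _; by rewrite !mxE.
  have Eij a b : V a b p q = E a b by rewrite /E mxE.
  have E00 : V i0 i0 p q = c by rewrite Eij Ec mxE eqxx mulr1n.
  rewrite Eij Ec mxE; case: eqP => _; first by rewrite mulr1n E00.
  by rewrite mulr0n mxE.
have HWe : W = (\sum_i ioY i *m prY i) *m W *m (\sum_j ioX j *m prX j).
  by rewrite DY.1 DX.1 mul1mx mulmx1.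
rewrite {1}HWe !mulmx_suml /lift; apply: eq_bigr => i _.
rewrite mulmx_sumr (eq_bigr (fun j => if i == j then ioY i *m V i0 i0 *m prX j else 0)).
  by rewrite sum_delta_l.
move=> j _.
have -> : ioY i *m prY i *m W *m (ioX j *m prX j) = ioY i *m V i j *m prX j.
  by rewrite /V !mulmxA.
rewrite EV; case: eqP => _ //.
by rewrite mulmx0 mul0mx.
Qed.
End D2.

Section Build.
Variables (K : fieldType) (s : nat).

Lemma idx_eq m (p q : 'I_m) (i j : 'I_s) :
  (mxvec_index p i == mxvec_index q j) = (p == q) && (i == j).
Proof.
by rewrite /mxvec_index (inj_eq (@cast_ord_inj _ _ _)) (inj_eq enum_rank_inj) xpair_eqE.
Qed.

Definition ioM m (j : 'I_s) : 'M[K]_(m * s, m) := \matrix_(k, p) ((k == mxvec_index p j)%:R).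
Definition prM m (j : 'I_s) : 'M[K]_(m, m * s) := (ioM m j)^T.

Lemma decM m : decomp (@ioM m) (@prM m).
Proof.
split.
- apply/matrixP => k l; rewrite summxE mxE.
  case/mxvec_indexP: k => p0 j0.
  rewrite (bigD1 j0) //= big1 ?addr0 => [|j nj].
    rewrite mxE (bigD1 p0) //= big1 ?addr0 => [|p np].
      by rewrite !mxE eqxx mul1r eq_sym.
    by rewrite !mxE idx_eq eq_sym (negPf np) mul0r.
  rewrite mxE big1 // => p _.
  by rewrite !mxE idx_eq (eq_sym j0) (negPf nj) andbF mul0r.
- move=> i j; apply/matrixP => p q; rewrite !mxE.
  rewrite (bigD1 (mxvec_index p i)) //= big1 ?addr0 => [|k nk]; last first.
    by rewrite !mxE (negPf nk) mul0r.
  rewrite !mxE eqxx mul1r idx_eq.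
  by case: (i == j); rewrite ?andbT ?andbF !mxE.
Qed.
End Build.

Section Homs.
Variables (K : fieldType) (T : Type).
Implicit Types X Y Z : mdata K T.

Lemma hom_mul X Y Z (f : 'M_(mdim Y, mdim X)) (g : 'M_(mdim Z, mdim Y)) :
  is_hom f -> is_hom g -> is_hom (g *m f).
Proof. by move=> Hf Hg t; rewrite -mulmxA Hf mulmxA Hg mulmxA. Qed.

Lemma hom1 X : is_hom (1%:M : 'M_(mdim X)).
Proof. by move=> t; rewrite mul1mx mulmx1. Qed.

Lemma hom0 X Y : is_hom (0 : 'M_(mdim Y, mdim X)).
Proof. by move=> t; rewrite mul0mx mulmx0. Qed.

Lemma hom_lin X Y c (f g : 'M_(mdim Y, mdim X)) :
  is_hom f -> is_hom g -> is_hom (c *: f + g).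
Proof.
by move=> Hf Hg t; rewrite mulmxDl mulmxDr -scalemxAl Hf Hg scalemxAr.
Qed.

Lemma hom_sum X Y (I : finType) (c : I -> K) (f : I -> 'M_(mdim Y, mdim X)) :
  (forall i, is_hom (f i)) -> is_hom (\sum_i c i *: f i).
Proof.
move=> Hf; elim/big_rec: _ => [|i x _ Hx]; first exact: hom0.
exact: hom_lin.
Qed.

Lemma hom_sum' X Y (I : finType) (f : I -> 'M_(mdim Y, mdim X)) :
  (forall i, is_hom (f i)) -> is_hom (\sum_i f i).
Proof.
move=> Hf; have := hom_sum (fun _ => 1) Hf.
by under eq_bigr => i _ do rewrite scale1r.
Qed.

Variables (P : mdata K T -> Prop) (F : fdata K T).
Hypothesis HF : is_functor P F.

Lemma fmap0 X Y : P X -> P Y -> fmap F (0 : 'M_(mdim Y, mdim X)) = 0.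
Proof.
move=> PX PY; case: HF => _ _ _ _ Hl.
have := Hl X Y 1 0 0 PX PY (hom0 _ _) (hom0 _ _).
rewrite !scale1r addr0 => E.
by apply: (addrI (fmap F (0 : 'M_(mdim Y, mdim X)))); rewrite addr0 -E.
Qed.

Lemma fmap_lsum X Y (I : finType) (c : I -> K) (f : I -> 'M_(mdim Y, mdim X)) :
  P X -> P Y -> (forall i, is_hom (f i)) ->
  fmap F (\sum_i c i *: f i) = \sum_i c i *: fmap F (f i).
Proof.
move=> PX PY Hf; case: HF => _ _ _ _ Hl.
pose Q (x : 'M_(mdim Y, mdim X)) (y : 'M_(mdim (fobj F Y), mdim (fobj F X))) :=
  is_hom x /\ fmap F x = y.
suff [] : Q (\sum_i c i *: f i) (\sum_i c i *: fmap F (f i)) by [].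
apply: (big_rec2 Q); first by split; [exact: hom0 | exact: fmap0].
move=> i x y _ [Hx Ey]; split; first exact: hom_lin.
by rewrite Hl // Ey.
Qed.

Lemma fmap_sum X Y (I : finType) (f : I -> 'M_(mdim Y, mdim X)) :
  P X -> P Y -> (forall i, is_hom (f i)) ->
  fmap F (\sum_i f i) = \sum_i fmap F (f i).
Proof.
move=> PX PY Hf; have := fmap_lsum (fun _ => 1) PX PY Hf.
under eq_bigr => i _ do rewrite scale1r.
by under [X in _ = X -> _]eq_bigr => i _ do rewrite scale1r.
Qed.

Lemma fmap_mul X Y Z (f : 'M_(mdim Y, mdim X)) (g : 'M_(mdim Z, mdim Y)) :
  P X -> P Y -> P Z -> is_hom f -> is_hom g -> fmap F (g *m f) = fmap F g *m fmap F f.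
Proof. by case: HF => _ _ _ Hc _; apply: Hc. Qed.

Lemma fmap1 X : P X -> fmap F (1%:M : 'M_(mdim X)) = 1%:M.
Proof. by case: HF => _ _ H _ _; apply: H. Qed.

Lemma fmap_hom X Y (f : 'M_(mdim Y, mdim X)) : P X -> P Y -> is_hom f -> is_hom (fmap F f).
Proof. by case: HF => _ H _ _ _; apply: H. Qed.

Lemma fobjP X : P X -> P (fobj F X).
Proof. by case: HF => H _ _ _ _; apply: H. Qed.

End Homs.

Section Blocks.
Variable K : fieldType.
Lemma bd_mul m1 m2 n1 n2 p1 p2 (a : 'M[K]_(m1,n1)) (d : 'M[K]_(m2,n2))
  (a' : 'M[K]_(n1,p1)) (d' : 'M[K]_(n2,p2)) :
  block_mx a 0 0 d *m block_mx a' 0 0 d' = block_mx (a *m a') 0 0 (d *m d').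
Proof. by rewrite mulmx_block !mulmx0 !mul0mx !addr0 add0r. Qed.
Lemma bd_lin m1 m2 n1 n2 c (a b : 'M[K]_(m1,n1)) (d e : 'M[K]_(m2,n2)) :
  c *: block_mx a 0 0 d + block_mx b 0 0 e = block_mx (c *: a + b) 0 0 (c *: d + e).
Proof. by rewrite scale_block_mx add_block_mx !scaler0 !addr0. Qed.
Lemma bd1 m1 m2 : block_mx (1%:M : 'M[K]_m1) 0 0 (1%:M : 'M[K]_m2) = 1%:M.
Proof. by rewrite -scalar_mx_block. Qed.

Lemma conj_inv n m p q (T : 'M[K]_(n, m)) (S : 'M[K]_(m, n)) (T' : 'M[K]_(p, q)) (S' : 'M[K]_(q, p))
  (x : 'M[K]_(m, q)) (y : 'M[K]_(n, p)) :
  S *m T = 1%:M -> T' *m S' = 1%:M -> T *m x = y *m T' -> S *m y = x *m S'.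
Proof.
move=> ST TS E.
by rewrite -[S *m y]mulmx1 -TS mulmxA -(mulmxA S y) -E mulmxA ST mul1mx.
Qed.

Lemma mx0E n (a b : 'M[K]_(0,n)) : a = b.
Proof. by rewrite (flatmx0 a) (flatmx0 b). Qed.

Lemma msum_amod (R : falgType K) (X Y : mdata K R) :
  is_amod X -> is_amod Y -> is_amod (msum X Y).
Proof.
case=> l1 u1 m1 [l2 u2 m2]; split => /=.
- by move=> c a b; rewrite l1 l2 bd_lin.
- by rewrite u1 u2 bd1.
- by move=> a b; rewrite m1 m2 bd_mul.
Qed.

Lemma mzero_amod (R : falgType K) : is_amod (@mzero K R).
Proof. by split => /= *; apply: mx0E. Qed.
End Blocks.

Section SimS.
Variables (K : fieldType) (A B : falgType K) (F : fdata K A).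
Notation Pa := (@is_amod K A).
Notation Pc := (@is_cmod K A B).
Hypothesis HF : is_functor Pa F.
Notation G := (fbox B F).

Lemma cmod_resA (X : mdata K (A + B)) : Pc X -> Pa (resA X).
Proof. by case. Qed.

Lemma beta_hom (X : mdata K (A + B)) b : Pc X -> is_hom (X := resA X) (Y := resA X) (mact X (inr b)).
Proof. by case=> _ _ Hc a /=; rewrite Hc. Qed.

Lemma chom_ahom (X Y : mdata K (A + B)) f : is_hom (X := X) (Y := Y) f -> is_hom (X := resA X) (Y := resA Y) f.
Proof. by move=> H a; apply: (H (inl a)). Qed.

Lemma G_cmod (X : mdata K (A + B)) : Pc X -> Pc (fobj G X).
Proof.
move=> PX; have PA := cmod_resA PX.
split.
- exact: (fobjP HF PA).
- split => /=.
  + move=> c a b; have [_ [lB _ _] _] := PX; have /= -> := lB c a b.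
    by case: HF => _ _ _ _ -> //; apply: beta_hom.
  + by have [_ [_ uB _] _] := PX; have /= -> := uB; rewrite (fmap1 HF).
  + move=> a b; have [_ [_ _ mB] _] := PX; have /= -> := mB a b.
    have H := (@fmap_mul _ _ _ _ HF (resA X) (resA X) (resA X)).
    rewrite H //; try exact: beta_hom; exact: cmod_resA.
- move=> a b /=; symmetry; apply: (fmap_hom HF PA PA (beta_hom b PX)).
Qed.

Lemma G_hom (X Y : mdata K (A + B)) f : Pc X -> Pc Y -> is_hom (X := X) (Y := Y) f ->
  is_hom (X := fobj G X) (Y := fobj G Y) (fmap G f).
Proof.
move=> PX PY Hf [a|b] /=.
  exact: (fmap_hom HF (cmod_resA PX) (cmod_resA PY) (chom_ahom Hf)).
rewrite -!(fmap_mul HF); first (by rewrite (Hf (inr b)));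
  by [apply: cmod_resA | apply: chom_ahom | apply: beta_hom].
Qed.

Definition Sim (HC : fdata K (A + B)) (HA : fdata K A) :=
  [/\ forall X, Pc X -> Pc (fobj HC X),
      is_functor Pa HA,
      forall X Y f, Pc X -> Pc Y -> is_hom (X := X) (Y := Y) f -> is_hom (fmap HC f)
    & exists (T : forall X, 'M[K]_(mdim (fobj HA (resA X)), mdim (fobj HC X)))
             (S : forall X, 'M[K]_(mdim (fobj HC X), mdim (fobj HA (resA X)))),
      (forall X, Pc X -> [/\ T X *m S X = 1%:M, S X *m T X = 1%:M,
          forall a, T X *m mact (fobj HC X) (inl a) = mact (fobj HA (resA X)) a *m T X
        & forall b, T X *m mact (fobj HC X) (inr b) =
             @fmap K A HA (resA X) (resA X) (mact X (inr b)) *m T X])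
      /\ (forall X Y f, Pc X -> Pc Y -> is_hom (X := X) (Y := Y) f ->
            T Y *m fmap HC f = @fmap K A HA (resA X) (resA Y) f *m T X)].


Lemma mzero_cmod : Pc (@mzero K (A + B)).
Proof.
split; [exact: (mzero_amod A) | exact: (mzero_amod B) |].
by move=> a b; apply: mx0E.
Qed.

Lemma msum_cmod (X Y : mdata K (A + B)) : Pc X -> Pc Y -> Pc (msum X Y).
Proof.
case=> a1 b1 c1 [a2 b2 c2]; split.
- exact: (msum_amod a1 a2).
- exact: (msum_amod b1 b2).
- by move=> a b /=; rewrite !bd_mul c1 c2.
Qed.

Lemma sim_id : Sim (@fid K (A + B)) (@fid K A).
Proof.
split => //.
- exists (fun X => 1%:M), (fun X => 1%:M); split.
    by move=> X PX; split => *; rewrite ?mulmx1 ?mul1mx.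
  by move=> *; rewrite /= mulmx1 mul1mx.
Qed.

Lemma sim_zero : Sim (@fzero K (A + B)) (@fzero K A).
Proof.
split => //.
- by move=> *; exact: mzero_cmod.
- split => //=.
  + by move=> *; exact: mzero_amod.
  + by move=> *; apply: mx0E.
  + by move=> *; rewrite mul0mx.
  + by move=> *; rewrite scaler0 addr0.
- exists (fun X => 0), (fun X => 0); split.
    by move=> X PX; split => *; apply: mx0E.
  by move=> *; apply: mx0E.
Qed.

Lemma fsum_functor (T : Type) (P : mdata K T -> Prop) H1 H2 :
  (forall X Y, P X -> P Y -> P (msum X Y)) ->
  is_functor P H1 -> is_functor P H2 -> is_functor P (fsum H1 H2).
Proof.
move=> Psum [o1 h1 i1 c1 l1] [o2 h2 i2 c2 l2]; split => /=.
- by move=> X PX; apply: Psum; [apply: o1 | apply: o2].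
- move=> X Y f PX PY Hf t /=; rewrite !bd_mul.
  by rewrite (h1 _ _ _ PX PY Hf) (h2 _ _ _ PX PY Hf).
- by move=> X PX; rewrite i1 // i2 // bd1.
- by move=> X Y Z f g PX PY PZ Hf Hg; rewrite c1 // c2 // bd_mul.
- by move=> X Y c f g PX PY Hf Hg; rewrite l1 // l2 // bd_lin.
Qed.

Lemma sim_sum H1 K1 H2 K2 : Sim H1 K1 -> Sim H2 K2 -> Sim (fsum H1 H2) (fsum K1 K2).
Proof.
case=> o1 f1 h1 [T1 [S1 [E1 N1]]] [o2 f2 h2 [T2 [S2 [E2 N2]]]]; split.
- by move=> X PX; apply: msum_cmod; [apply: o1 | apply: o2].
- by apply: fsum_functor => //; exact: msum_amod.
- move=> X Y f PX PY Hf t /=; rewrite !bd_mul.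
  by rewrite (h1 _ _ _ PX PY Hf) (h2 _ _ _ PX PY Hf).
- exists (fun X => block_mx (T1 X) 0 0 (T2 X)), (fun X => block_mx (S1 X) 0 0 (S2 X)).
  split.
    move=> X PX; have [a1 b1 c1 d1] := E1 X PX; have [a2 b2 c2 d2] := E2 X PX.
    split => [|||t] /=.
    + by rewrite bd_mul a1 a2 bd1.
    + by rewrite bd_mul b1 b2 bd1.
    + by move=> a; rewrite !bd_mul c1 c2.
    + by rewrite !bd_mul d1 d2.
  by move=> X Y f PX PY Hf /=; rewrite !bd_mul N1 // N2.
Qed.

Lemma sim_comp H K' : Sim H K' -> Sim (fcomp G H) (fcomp F K').
Proof.
case=> oH fK hH [T [S [E N]]].
have [oK hK iK cK lK] := fK.
split.
- by move=> X PX; apply: G_cmod; apply: oH.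
- split => /=.
  + by move=> X PX; apply: (fobjP HF); apply: oK.
  + by move=> X Y f PX PY Hf; apply: (fmap_hom HF); [apply: oK | apply: oK | apply: hK].
  + by move=> X PX; rewrite iK // (fmap1 HF) //; apply: oK.
  + move=> X Y Z f g PX PY PZ Hf Hg; rewrite cK // (fmap_mul HF) //.
    - exact: oK PX.
    - exact: oK PY.
    - exact: oK PZ.
    - exact: hK _ _ _ PX PY Hf.
    - exact: hK _ _ _ PY PZ Hg.
  + move=> X Y c f g PX PY Hf Hg; rewrite lK //; have [_ _ _ _ lF] := HF; rewrite lF //.
    - exact: oK PX.
    - exact: oK PY.
    - exact: hK _ _ _ PX PY Hf.
    - exact: hK _ _ _ PX PY Hg.
- move=> X Y f PX PY Hf; apply: G_hom => //; [apply: oH | apply: oH | apply: hH] => //.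
- have Thom X : Pc X -> is_hom (X := resA (fobj H X)) (Y := fobj K' (resA X)) (T X).
    by move=> PX a; have [_ _ -> _] := E X PX.
  have Shom X : Pc X -> is_hom (X := fobj K' (resA X)) (Y := resA (fobj H X)) (S X).
    move=> PX a; have [TS ST Ta _] := E X PX.
    by rewrite -[S X *m _]mulmx1 -TS !mulmxA -(mulmxA (S X)) -Ta mulmxA ST mul1mx.
  exists (fun X => @fmap K A F (resA (fobj H X)) (fobj K' (resA X)) (T X)).
  exists (fun X => @fmap K A F (fobj K' (resA X)) (resA (fobj H X)) (S X)).
  split.
    move=> X PX.
    have PHX : Pa (resA (fobj H X)) by apply: cmod_resA; apply: oH.
    have PKX : Pa (fobj K' (resA X)) by apply: oK; apply: cmod_resA.
    have [TS ST Ta Tb] := E X PX.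
    have Th := Thom X PX; have Sh := Shom X PX.
    split.
    + by rewrite -(fmap_mul HF) // TS (fmap1 HF).
    + by rewrite -(fmap_mul HF) // ST (fmap1 HF).
    + by move=> a; apply: (fmap_hom HF PHX PKX (Thom X PX)).
    + move=> b /=.
      have Hb : is_hom (X := resA X) (Y := resA X) (mact X (inr b)) by apply: beta_hom.
      have HKb := hK _ _ _ (cmod_resA PX) (cmod_resA PX) Hb.
      have Hb' : is_hom (X := resA (fobj H X)) (Y := resA (fobj H X)) (mact (fobj H X) (inr b)).
        exact: beta_hom (oH _ PX).
      by rewrite -!(fmap_mul HF) // Tb.
  move=> X Y f PX PY Hf /=.
  have PHX : Pa (resA (fobj H X)) by apply: cmod_resA; apply: oH.
  have PKX : Pa (fobj K' (resA X)) by apply: oK; apply: cmod_resA.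
  have PHY : Pa (resA (fobj H Y)) by apply: cmod_resA; apply: oH.
  have PKY : Pa (fobj K' (resA Y)) by apply: oK; apply: cmod_resA.
  have Hf' := chom_ahom Hf.
  have H1 := chom_ahom (hH _ _ _ PX PY Hf).
  have H2 := Thom X PX; have H3 := Thom Y PY.
  have H4 := hK _ _ _ (cmod_resA PX) (cmod_resA PY) Hf'.
  by rewrite -!(fmap_mul HF) // N.
Qed.

Lemma sim_pow j : Sim (fpow G j) (fpow F j).
Proof. elim: j => [|j IH] /=; [exact: sim_id | exact: sim_comp]. Qed.

Lemma sim_copies c H K' : Sim H K' -> Sim (fcopies c H) (fcopies c K').
Proof. by move=> S; elim: c => [|c IH] /=; [exact: sim_zero | exact: sim_sum]. Qed.

Lemma sim_poly_from p j : Sim (fpoly_from j p G) (fpoly_from j p F).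
Proof.
elim: p j => [|c p IH] j /=; first exact: sim_zero.
apply: sim_sum => //; apply: sim_copies; exact: sim_pow.
Qed.

Lemma part2 g h : natiso Pa (fpoly g F) (fpoly h F) ->
  natiso Pc (fpoly g G) (fpoly h G).
Proof.
case=> eta [theta [Ei Nat]].
have [_ _ _ [Tg [Sg [Eg Ng]]]] := sim_poly_from g 0.
have [_ _ _ [Th [Sh [Eh Nh]]]] := sim_poly_from h 0.
exists (fun X => Sh X *m eta (resA X) *m Tg X).
exists (fun X => Sg X *m theta (resA X) *m Th X).
split.
  move=> X PX; have PA := cmod_resA PX.
  have [e1 e2 e3 e4] := Ei _ PA.
  have [TSg STg Tag Tbg] := Eg X PX; have [TSh STh Tah Tbh] := Eh X PX.
  have Sah a : Sh X *m mact (fobj (fpoly h F) (resA X)) a = mact (fobj (fpoly h G) X) (inl a) *m Sh X.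
    exact: (conj_inv STh TSh (Tah a)).
  have Sbh b : Sh X *m @fmap K A (fpoly h F) (resA X) (resA X) (mact X (inr b))
      = mact (fobj (fpoly h G) X) (inr b) *m Sh X.
    exact: (conj_inv STh TSh (Tbh b)).
  have Sag a : Sg X *m mact (fobj (fpoly g F) (resA X)) a = mact (fobj (fpoly g G) X) (inl a) *m Sg X.
    exact: (conj_inv STg TSg (Tag a)).
  have Sbg b : Sg X *m @fmap K A (fpoly g F) (resA X) (resA X) (mact X (inr b))
      = mact (fobj (fpoly g G) X) (inr b) *m Sg X.
    exact: (conj_inv STg TSg (Tbg b)).
  split.
  - move=> [a|b].
      by rewrite -!mulmxA Tag !mulmxA -(mulmxA (Sh X)) e1 mulmxA Sah.
    rewrite -!mulmxA Tbg !mulmxA -(mulmxA (Sh X)) Nat //; last exact: beta_hom.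
    by rewrite mulmxA Sbh.
  - move=> [a|b].
      by rewrite -!mulmxA Tah !mulmxA -(mulmxA (Sg X)) e2 mulmxA Sag.
    have [_ _ _ Nt] : [/\ True, True, True &
        theta (resA X) *m @fmap K A (fpoly h F) (resA X) (resA X) (mact X (inr b))
        = @fmap K A (fpoly g F) (resA X) (resA X) (mact X (inr b)) *m theta (resA X)].
      split => //.
      exact: (conj_inv e4 e3 (Nat _ _ _ PA PA (beta_hom b PX))).
    rewrite -!mulmxA Tbh !mulmxA -(mulmxA (Sg X)) Nt.
    by rewrite mulmxA Sbg.
  - by rewrite -!mulmxA (mulmxA (Tg X)) TSg mul1mx (mulmxA (eta _)) e3 mul1mx STh.
  - by rewrite -!mulmxA (mulmxA (Th X)) TSh mul1mx (mulmxA (theta _)) e4 mul1mx STg.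
move=> X Y f PX PY Hf.
have PA := cmod_resA PX; have PB := cmod_resA PY.
have [TSh STh _ _] := Eh X PX; have [TSh' STh' _ _] := Eh Y PY.
rewrite -!mulmxA Ng // (mulmxA (eta _)) Nat //; last exact: chom_ahom.
have E : Sh Y *m @fmap K A (fpoly h F) (resA X) (resA Y) f = fmap (fpoly h G) f *m Sh X.
  exact: (conj_inv STh' TSh (Nh _ _ _ PX PY Hf)).
by rewrite !mulmxA E.
Qed.
End SimS.

Section Fwd.
Variables (K : fieldType) (A B : falgType K) (F : fdata K A).
Notation Pa := (@is_amod K A).
Notation Pc := (@is_cmod K A B).
Hypothesis HF : is_functor Pa F.
Notation G := (fbox B F).

Lemma fwd : selfadjoint Pa F -> selfadjoint Pc G.
Proof.
case=> phi [psi [H1 H2 H3]].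
exists (fun X Y u => phi (resA X) (resA Y) u), (fun X Y v => psi (resA X) (resA Y) v).
split.
- move=> X Y u PX PY Hu.
  have PA := cmod_resA PX; have PB := cmod_resA PY.
  have Hu' : is_hom (X := fobj F (resA X)) (Y := resA Y) u by move=> a; exact: (Hu (inl a)).
  have [Hp Hpp] := H1 _ _ _ PA PB Hu'.
  split => //.
  move=> [a|b]; first exact: (Hp a).
  have Hbx := beta_hom b PX; have Hby := beta_hom b PY.
  have E1 := H3 (resA X) (resA X) (resA Y) (resA Y) (mact X (inr b)) u 1%:M PA PA PB PB Hbx Hu' (hom1 _).
  have E2 := H3 (resA X) (resA X) (resA Y) (resA Y) 1%:M u (mact Y (inr b)) PA PA PB PB (hom1 _) Hu' Hby.
  rewrite (fmap1 HF) // !mul1mx in E1.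
  rewrite (fmap1 HF) // !mulmx1 in E2.
  by rewrite /= -E1 -E2 (Hu (inr b)).
- move=> X Y v PX PY Hv.
  have PA := cmod_resA PX; have PB := cmod_resA PY.
  have Hv' : is_hom (X := resA X) (Y := fobj F (resA Y)) v by move=> a; exact: (Hv (inl a)).
  have [Hp Hpp] := H2 _ _ _ PA PB Hv'.
  split => //.
  move=> [a|b]; first exact: (Hp a).
  have Hbx := beta_hom b PX; have Hby := beta_hom b PY.
  have FHbx := fmap_hom HF PA PA Hbx.
  have W1 : is_hom (X := fobj F (resA X)) (Y := resA Y) (psi (resA X) (resA Y) v *m @fmap K A F (resA X) (resA X) (mact X (inr b))).
    exact: (hom_mul FHbx Hp).
  have W2 : is_hom (X := fobj F (resA X)) (Y := resA Y) (mact Y (inr b) *m psi (resA X) (resA Y) v).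
    exact: (hom_mul Hp Hby).
  have E1 := H3 (resA X) (resA X) (resA Y) (resA Y) (mact X (inr b)) (psi (resA X) (resA Y) v) 1%:M PA PA PB PB Hbx Hp (hom1 _).
  have E2 := H3 (resA X) (resA X) (resA Y) (resA Y) 1%:M (psi (resA X) (resA Y) v) (mact Y (inr b)) PA PA PB PB (hom1 _) Hp Hby.
  rewrite (fmap1 HF) // !mul1mx Hpp in E1.
  rewrite (fmap1 HF) // !mulmx1 Hpp in E2.
  rewrite /= -(H1 _ _ _ PA PB W1).2 -(H1 _ _ _ PA PB W2).2.
  by rewrite E1 E2 (Hv (inr b)).
- move=> X' X Y Y' h u g PX' PX PY PY' Hh Hu Hg.
  have Hu' : is_hom (X := fobj F (resA X)) (Y := resA Y) u by move=> a; exact: (Hu (inl a)).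
  exact: (H3 (resA X') (resA X) (resA Y) (resA Y') h u g (cmod_resA PX') (cmod_resA PX)
    (cmod_resA PY) (cmod_resA PY') (chom_ahom Hh) Hu' (chom_ahom Hg)).
Qed.
End Fwd.

Section Brick.
Variables (K : closedFieldType) (B : falgType K).

Definition modrep n (rho : B -> 'M[K]_n) := is_amod (@MData K B n rho).

Lemma sub_mod n (rho : B -> 'M[K]_n) (g : 'M[K]_n) :
  modrep rho -> (forall b, g *m rho b = rho b *m g) ->
  exists rho' : B -> 'M[K]_(\rank g), modrep rho'.
Proof.
case=> /= Hlin H1 Hmul Hg.
set r := \rank g.
pose P : 'M[K]_(n, r) := col_ebase g *m pid_mx r.
pose P' : 'M[K]_(r, n) := pid_mx r *m invmx (col_ebase g).
pose Q : 'M[K]_(r, n) := pid_mx r *m row_ebase g.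
pose Q'' : 'M[K]_(n, r) := invmx (row_ebase g) *m pid_mx r.
have rn : (r <= n)%N by apply: rank_leq_row.
have PQ : P *m Q = g.
  rewrite /P /Q mulmxA -(mulmxA (col_ebase g)) mul_pid_mx minnn.
  by rewrite minnn mulmx_ebase.
have P'P : P' *m P = 1%:M.
  rewrite /P /P' mulmxA -(mulmxA _ (invmx _)) mulVmx ?col_ebase_unit // mulmx1.
  by rewrite mul_pid_mx minnn (minn_idPr rn) pid_mx_1.
have QQ : Q *m Q'' = 1%:M.
  rewrite /Q'' /Q mulmxA -(mulmxA _ (row_ebase g)) mulmxV ?row_ebase_unit // mulmx1.
  by rewrite mul_pid_mx minnn (minn_idPr rn) pid_mx_1.
clearbody P P' Q Q''.
have rhoP b : rho b *m P = P *m (P' *m rho b *m P).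
  have E1 : rho b *m P = P *m (Q *m rho b *m Q'').
    by rewrite !mulmxA PQ Hg -PQ -!mulmxA QQ mulmx1.
  by rewrite -(mulmxA P') E1 (mulmxA P') P'P mul1mx.
exists (fun b => P' *m rho b *m P); split => /=.
- by move=> c a b; rewrite Hlin mulmxDr mulmxDl -scalemxAr -scalemxAl.
- by rewrite H1 mulmx1.
- move=> a b; rewrite Hmul -!mulmxA [rho b *m P]rhoP.
  by rewrite (mulmxA P' P) P'P mul1mx.
Qed.

Lemma brick_ind n (rho : B -> 'M[K]_n.+1) : modrep rho ->
  exists s (rho' : B -> 'M[K]_s.+1), modrep rho' /\
    forall f, (forall b, f *m rho' b = rho' b *m f) -> exists c, f = c%:M.
Proof.
elim/ltn_ind: n rho => n IH rho Hr.
case: (classic (forall f, (forall b, f *m rho b = rho b *m f) -> exists c, f = c%:M)) => Hs.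
  by exists n, rho.
have [f [Hf Hnf]] : exists f, (forall b, f *m rho b = rho b *m f) /\ ~ exists c, f = c%:M.
  apply: NNPP => H; apply: Hs => f Hf; apply: NNPP => Hn; apply: H.
  by exists f.
have [c Hc] : exists c, root (char_poly f) c.
  by apply/closed_rootP; rewrite size_char_poly.
pose g := f - c%:M.
have Hg b : g *m rho b = rho b *m g.
  by rewrite /g mulmxBl mulmxBr Hf scalar_mxC.
have [rho' Hr'] := sub_mod Hr Hg.
have g0 : g != 0.
  apply/eqP => g0; apply: Hnf; exists c; apply/eqP; rewrite -subr_eq0; exact/eqP.
have rpos : (0 < \rank g)%N by rewrite lt0n mxrank_eq0.
have rlt : (\rank g < n.+1)%N.
  rewrite ltn_neqAle rank_leq_row andbT.
  apply/negP => /eqP rn.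
  have : eigenvalue f c by rewrite eigenvalue_root_char.
  rewrite /eigenvalue /eigenspace kermx_eq0 /row_free.
  by rewrite -/g rn eqxx.
move: rho' Hr'; case E : (\rank g) rpos rlt => [//|r] _ rlt rho' Hr'.
exact: (IH r rlt rho' Hr').
Qed.

End Brick.

Section Reg.
Variables (K : fieldType) (B : falgType K).
Import VectorInternalTheory.

Lemma mul_rV_lin1' m n (f : 'rV[K]_m -> 'rV[K]_n)
  (Hf : forall (c : K) x y, f (c *: x + y) = c *: f x + f y) u :
  u *m lin1_mx f = f u.
Proof.
pose fL : {linear 'rV[K]_m -> 'rV[K]_n} := HB.pack f (GRing.isLinear.Build _ _ _ _ f Hf).
exact: (mul_rV_lin1 fL).
Qed.

Definition regL (b : B) : 'M[K]_(dim B) := lin1_mx (fun u => v2r (b * r2v u)).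

Lemma reg_mod : is_amod (@MData K B (dim B) (fun b => (regL b)^T)).
Proof.
split => /=.
- move=> c a b; apply/matrixP => i j; rewrite !mxE.
  by rewrite mulrDl -scalerAl linearD linearZ /= !mxE.
- apply/matrixP => i j; rewrite !mxE mul1r r2vK mxE.
  by rewrite eq_sym; case: (i == j); rewrite ?andbT ?andbF /=.
- move=> a b; rewrite -trmx_mul; congr (_^T); apply/eqP/mulmxP => u.
  have Hl (c : B) (d : K) x y : v2r (c * r2v (d *: x + y)) = d *: v2r (c * r2v x) + v2r (c * r2v y).
    by rewrite linearD linearZ /= mulrDr -scalerAr linearD linearZ.
  by rewrite mulmxA /regL !mul_rV_lin1' // v2rK mulrA.
Qed.

Lemma dim_pos : (0 < dim B)%N.
Proof.
rewrite lt0n; apply/eqP => d0.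
have : v2r (1 : B) = v2r 0.
  move: (v2r (1 : B)) (v2r (0 : B)); rewrite d0 => u v.
  by rewrite [u]thinmx0 [v]thinmx0.
by move/v2r_inj/eqP; rewrite oner_eq0.
Qed.
End Reg.

Lemma brick (K : closedFieldType) (B : falgType K) :
  exists s (rho : B -> 'M[K]_s.+1), modrep rho /\
    forall f, (forall b, f *m rho b = rho b *m f) -> exists c, f = c%:M.
Proof.
have := @reg_mod K B; have := @dim_pos K B.
move: (@regL K B); case: (dim B) => [//|n] L _ H.
exact: (brick_ind (rho := fun b => (L b)^T)).
Qed.

Section Rev.
Variables (K : fieldType) (A B : falgType K) (F : fdata K A).
Notation Pa := (@is_amod K A).
Notation Pc := (@is_cmod K A B).
Hypothesis HF : is_functor Pa F.
Notation G := (fbox B F).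
Variables (s : nat) (rho : B -> 'M[K]_s.+1).
Hypothesis Hrho : is_amod (@MData K B s.+1 rho).
Hypothesis Schur : forall f, (forall b, f *m rho b = rho b *m f) -> exists c, f = c%:M.
Notation S := s.+1.
Notation i0 := (@ord0 s).

Definition io (M : mdata K A) (j : 'I_S) := @ioM K S (mdim M) j.
Definition pr (M : mdata K A) (j : 'I_S) := @prM K S (mdim M) j.

Definition XM (M : mdata K A) : mdata K (A + B) :=
  @MData K (A + B) (mdim M * S) (fun t => match t with
     | inl a => lift (io M) (pr M) (mact M a)
     | inr b => bact (io M) (pr M) (rho b) end).

Lemma decX M : decomp (io M) (pr M).
Proof. exact: decM. Qed.

Lemma XM_cmod M : Pa M -> Pc (XM M).
Proof.
case=> l1 u1 m1; have [/= l2 u2 m2] := Hrho; split.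
- split => /=.
  + by move=> c a b; rewrite l1 lift_lin.
  + by rewrite u1 lift1 //; exact: decX.
  + by move=> a b; rewrite m1 lift_mul //; exact: decX.
- split => /=.
  + by move=> c a b; rewrite l2 bact_lin.
  + by rewrite u2 bact1 //; exact: decX.
  + by move=> a b; rewrite m2 bact_mul //; exact: decX.
- by move=> a b /=; rewrite (bact_lift (decX M) (decX M)).
Qed.

Lemma io_hom M j : is_hom (X := M) (Y := resA (XM M)) (io M j).
Proof. by move=> a /=; rewrite lift_io //; exact: decX. Qed.

Lemma pr_hom M j : is_hom (X := resA (XM M)) (Y := M) (pr M j).
Proof. by move=> a /=; rewrite pr_lift //; exact: decX. Qed.

Lemma liftC M N w : is_hom (X := M) (Y := N) w ->
  is_hom (X := XM M) (Y := XM N) (lift (io N) (pr M) w).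
Proof.
move=> Hw [a|b] /=.
  by rewrite !lift_mul ?Hw //; exact: decX.
by rewrite (bact_lift (decX N) (decX M)).
Qed.

Definition ioF (N : mdata K A) (j : 'I_S) := @fmap K A F N (resA (XM N)) (io N j).
Definition prF (N : mdata K A) (j : 'I_S) := @fmap K A F (resA (XM N)) N (pr N j).

Lemma decF N : Pa N -> decomp (ioF N) (prF N).
Proof.
move=> PN; have PX := cmod_resA (XM_cmod PN).
split.
- rewrite (eq_bigr (fun i => @fmap K A F (resA (XM N)) (resA (XM N)) (io N i *m pr N i))).
    rewrite -(fmap_sum HF) //; first by rewrite (decX N).1 (fmap1 HF).
    by move=> i; apply: hom_mul; [exact: pr_hom | exact: io_hom].
  by move=> i _; rewrite (fmap_mul HF) //; [exact: pr_hom | exact: io_hom].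
- move=> i j; rewrite /prF /ioF -(fmap_mul HF) //; [|exact: io_hom|exact: pr_hom].
  rewrite (decX N).2; case: eqP => _; first exact: (fmap1 HF).
  exact: (fmap0 HF).
Qed.


Lemma Aact_F N a : Pa N ->
  mact (fobj F (resA (XM N))) a = lift (ioF N) (prF N) (mact (fobj F N) a).
Proof.
move=> PN; have PX := cmod_resA (XM_cmod PN).
apply: (hom_decomp (decF PN)) => i.
by rewrite -(fmap_hom HF PN PX (io_hom N i)).
Qed.

Lemma Bact_F N r : Pa N ->
  @fmap K A F (resA (XM N)) (resA (XM N)) (bact (io N) (pr N) r) = bact (ioF N) (prF N) r.
Proof.
move=> PN; have PX := cmod_resA (XM_cmod PN).
have Hij i j : is_hom (X := resA (XM N)) (Y := resA (XM N)) (io N i *m pr N j).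
  by apply: hom_mul; [exact: pr_hom | exact: io_hom].
rewrite /bact (fmap_sum HF) //; last first.
  by move=> i; apply: hom_sum.
apply: eq_bigr => i _; rewrite (fmap_lsum HF) //.
by apply: eq_bigr => j _; rewrite (fmap_mul HF) //; [exact: pr_hom | exact: io_hom].
Qed.

Lemma lift_F M N (w : 'M[K]_(mdim N, mdim M)) : Pa M -> Pa N -> is_hom (X := M) (Y := N) w ->
  @fmap K A F (resA (XM M)) (resA (XM N)) (lift (io N) (pr M) w) =
  lift (ioF N) (prF M) (fmap F w).
Proof.
move=> PM PN Hw; have PXM := cmod_resA (XM_cmod PM); have PXN := cmod_resA (XM_cmod PN).
rewrite /lift (fmap_sum HF) //; last first.
  by move=> i; exact: (hom_mul (pr_hom M i) (hom_mul Hw (io_hom N i))).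
have Hio i := io_hom N i; have Hpr i := pr_hom M i.
apply: eq_bigr => i _; rewrite (fmap_mul HF) //; last exact: (hom_mul Hw (io_hom N i)).
by rewrite (fmap_mul HF).
Qed.


Lemma UC M N u : Pa M -> Pa N -> is_hom (X := fobj F M) (Y := N) u ->
  is_hom (X := fobj G (XM M)) (Y := XM N) (lift (io N) (prF M) u).
Proof.
move=> PM PN Hu [a|b] /=.
  by rewrite Aact_F // (lift_mul (decF PM)) (lift_mul (decX N)) Hu.
by rewrite Bact_F // (bact_lift (decX N) (decF PM)).
Qed.

Lemma VC M N v : Pa M -> Pa N -> is_hom (X := M) (Y := fobj F N) v ->
  is_hom (X := XM M) (Y := fobj G (XM N)) (lift (ioF N) (pr M) v).
Proof.
move=> PM PN Hv [a|b] /=.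
  by rewrite Aact_F // (lift_mul (decX M)) (lift_mul (decF PN)) Hv.
by rewrite Bact_F // (bact_lift (decF PN) (decX M)).
Qed.

Lemma W1 M N W : Pa M -> Pa N -> is_hom (X := XM M) (Y := fobj G (XM N)) W ->
  W = lift (ioF N) (pr M) (prF N i0 *m W *m io M i0).
Proof.
move=> PM PN HW; apply: (commute_lift (decF PN) (decX M) Schur) => b.
by have := HW (inr b); rewrite /= Bact_F.
Qed.

Lemma W2 M N Z : Pa M -> Pa N -> is_hom (X := fobj G (XM M)) (Y := XM N) Z ->
  Z = lift (io N) (prF M) (pr N i0 *m Z *m ioF M i0).
Proof.
move=> PM PN HZ; apply: (commute_lift (decX N) (decF PM) Schur) => b.
by have := HZ (inr b); rewrite /= Bact_F.
Qed.

Lemma rev : selfadjoint Pc G -> selfadjoint Pa F.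
Proof.
case=> phi [psi [H1 H2 H3]].
exists (fun M N u => prF N i0 *m phi (XM M) (XM N) (lift (io N) (prF M) u) *m io M i0).
exists (fun M N v => pr N i0 *m psi (XM M) (XM N) (lift (ioF N) (pr M) v) *m ioF M i0).
split.
- move=> M N u PM PN Hu.
  have PXM := XM_cmod PM; have PXN := XM_cmod PN.
  have HU := UC PM PN Hu.
  have [HP HPP] := H1 _ _ _ PXM PXN HU.
  split.
  + have HP' : is_hom (X := resA (XM M)) (Y := fobj F (resA (XM N)))
        (phi (XM M) (XM N) (lift (io N) (prF M) u)) by move=> a; exact: (HP (inl a)).
    have Hpr : is_hom (prF N i0) := fmap_hom HF (cmod_resA PXN) PN (pr_hom N i0).
    exact: (hom_mul (io_hom M i0) (hom_mul HP' Hpr)).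
  + rewrite -(W1 PM PN HP) HPP (pr_lift (decX N)) -mulmxA (decF PM).2 eqxx.
    by rewrite mulmx1.
- move=> M N v PM PN Hv.
  have PXM := XM_cmod PM; have PXN := XM_cmod PN.
  have HV := VC PM PN Hv.
  have [HP HPP] := H2 _ _ _ PXM PXN HV.
  split.
  + have HP' : is_hom (X := fobj F (resA (XM M))) (Y := resA (XM N))
        (psi (XM M) (XM N) (lift (ioF N) (pr M) v)) by move=> a; exact: (HP (inl a)).
    have Hio : is_hom (ioF M i0) := fmap_hom HF PM (cmod_resA PXM) (io_hom M i0).
    exact: (hom_mul Hio (hom_mul HP' (pr_hom N i0))).
  + rewrite -(W2 PM PN HP) HPP (pr_lift (decF PN)) -mulmxA (decX M).2 eqxx.
    by rewrite mulmx1.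
- move=> M' M N N' h u g PM' PM PN PN' Hh Hu Hg.
  have PXM := XM_cmod PM; have PXN := XM_cmod PN.
  have PXM' := XM_cmod PM'; have PXN' := XM_cmod PN'.
  have Eu : lift (io N') (prF M') (g *m u *m fmap F h) =
            lift (io N') (pr N) g *m lift (io N) (prF M) u *m
            @fmap K A F (resA (XM M')) (resA (XM M)) (lift (io M) (pr M') h).
    by rewrite (lift_F PM' PM Hh) (lift_mul (decX N)) (lift_mul (decF PM)).
  rewrite Eu.
  have Hg' := liftC Hg; have Hh' := liftC Hh.
  rewrite (H3 _ _ _ _ _ _ _ PXM' PXM PXN PXN' Hh' (UC PM PN Hu) Hg') /=.
  rewrite (lift_F PN PN' Hg).
  rewrite !mulmxA (pr_lift (decF PN')) -!mulmxA (lift_io (decX M')).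
  by rewrite !mulmxA.
Qed.

End Rev.

Local Close Scope ring_scope.
Unset Implicit Arguments.

Theorem proposition15 (k : closedFieldType) (A B : falgType k)
  (g h : seq nat) (F : fdata k A) :
  is_functor (@is_amod k A) F ->
  exact_functor (@is_amod k A) F ->
  natiso (@is_amod k A) (fpoly g F) (fpoly h F) ->
  (selfadjoint (@is_cmod k A B) (fbox B F) <-> selfadjoint (@is_amod k A) F) /\
  natiso (@is_cmod k A B) (fpoly g (fbox B F)) (fpoly h (fbox B F)).
Proof.
move=> HF _ Hn; split; last exact: (part2 B HF Hn).
split; last exact: (fwd B HF).
have [s [rho [Hr Hs]]] := brick B.
exact: (rev HF Hr Hs).
Qed.
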